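(* Let $n$ be a positive integer and let $L_2(n)$ denote the number of $2\times n$ Latin rectangles. Then \[ L_2(n)=\sum_{s_{00}+s_{10}+s_{01}+s_{11}=n}(-1)^{s_{10}+s_{01}+2s_{11}}\frac{n!}{s_{00}!\,s_{10}!\,s_{01}!\,s_{11}!}\big[(s_{00}+s_{10})(s_{00}+s_{01})-s_{00}\big]^n, \] where the sum runs over all quadruples of nonnegative integers with sum $n$.
   Context: A $k\times n$ Latin rectangle is a $k\times n$ matrix with entries in $\{1,\dots,n\}$ such that no row and no column contains a repeated entry (so each row is a permutation of $\{1,\dots,n\}$). The convention $0^0=1$ is used. *)

(* Defs.v *)
From mathcomp Require Import all_boot all_order all_algebra.
Set Implicit Arguments. Unset Strict Implicit. Unset Printing Implicit Defensive.

Definition latin_rect (k n : nat) (A : {ffun 'I_k * 'I_n -> 'I_n}) : bool :=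
  [forall i : 'I_k, forall j1 : 'I_n, forall j2 : 'I_n,
      (A (i, j1) == A (i, j2)) ==> (j1 == j2)] &&
  [forall j : 'I_n, forall i1 : 'I_k, forall i2 : 'I_k,
      (A (i1, j) == A (i2, j)) ==> (i1 == i2)].

Definition L (k n : nat) : nat := #|[set A | @latin_rect k n A]|.

(* Main.v *)
Require Import Defs.
From mathcomp Require Import all_boot all_order all_algebra.
From mathcomp Require Import zify ring.
Import GRing.Theory.
Local Open Scope ring_scope.

Lemma Tcount (U : finType) (S : {set U}) (d c : nat) :
  #|[set T : {set U} | (#|T :&: S| == d) && (#|T :&: ~:S| == c)]| =
  ('C(#|S|, d) * 'C(#|~:S|, c))%N.
Proof.
rewrite -!cards_draws -cardsX.
set D := [set T : {set U} | _].
pose f (T : {set U}) := (T :&: S, T :&: ~: S).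
have finj : injective f.
  move=> T1 T2 [e1 e2].
  by rewrite -(setID T1 S) -(setID T2 S) !setDE e1 e2.
rewrite -(card_imset D finj); apply: eq_card => -[X Y]; rewrite !inE /=.
apply/imsetP/andP.
  case=> T; rewrite inE => /andP [h1 h2] [-> ->].
  by rewrite !subsetIr h1 h2; split.
case=> /andP [hX1 hX2] /andP [hY1 hY2].
exists (X :|: Y).
  have e1 : (X :|: Y) :&: S = X.
    apply/setP => x; rewrite !inE.
    have := subsetP hX1 x; have := subsetP hY1 x; rewrite !inE.
    by case: (x \in X); case: (x \in Y); case: (x \in S) => //= H1 H2; by [have := H1 isT | have := H2 isT].
  have e2 : (X :|: Y) :&: ~: S = Y.
    apply/setP => x; rewrite !inE.
    have := subsetP hX1 x; have := subsetP hY1 x; rewrite !inE.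
    by case: (x \in X); case: (x \in Y); case: (x \in S) => //= H1 H2; by [have := H1 isT | have := H2 isT].
  by rewrite inE e1 e2 hX2 hY2.
rewrite /f; congr pair; apply/setP => x; rewrite !inE;
  have := subsetP hX1 x; have := subsetP hY1 x; rewrite !inE;
  by case: (x \in X); case: (x \in Y); case: (x \in S) => //= H1 H2; by [have := H1 isT | have := H2 isT].
Qed.

Lemma multinom (n a b c : nat) : (a + b + c <= n)%N ->
  (n`! %/ (a`! * b`! * c`! * (n - (a + b + c))`!))%N =
  ('C(n, b + (n - (a + b + c))) * 'C(b + (n - (a + b + c)), n - (a + b + c))
     * 'C(n - (b + (n - (a + b + c))), c))%N.
Proof.
move=> h; set d := (n - (a + b + c))%N.
have e1 := @bin_fact n (b + d) ltac:(lia).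
have e2 := @bin_fact (b + d) d ltac:(lia).
have e3 := @bin_fact (n - (b + d)) c ltac:(lia).
have q2 : (b + d - d = b)%N by lia.
have q3 : (n - (b + d) - c = a)%N by lia.
rewrite q2 in e2; rewrite q3 in e3.
have E : n`! = ('C(n, b + d) * 'C(b + d, d) * 'C(n - (b + d), c) *
                (a`! * b`! * c`! * d`!))%N.
  by rewrite -e1 -e3 -e2; ring.
by rewrite E mulnK // !muln_gt0 !fact_gt0.
Qed.

Lemma Ncount (n a b c : nat) : (a + b + c <= n)%N ->
  (\sum_(S : {set 'I_n}) #|[set T : {set 'I_n} |
     [&& #|~:S :&: ~:T| == a, #|S :&: ~:T| == b & #|~:S :&: T| == c]]|)%N =
  ('C(n, b + (n - (a + b + c))) * 'C(b + (n - (a + b + c)), n - (a + b + c))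
     * 'C(n - (b + (n - (a + b + c))), c))%N.
Proof.
move=> h; set d := (n - (a + b + c))%N.
transitivity (\sum_(S : {set 'I_n}) (#|S| == b + d) *
   ('C(b + d, d) * 'C(n - (b + d), c)))%N.
  apply: eq_bigr => S _.
  have h3 : (#|S| + #|~:S| = n)%N by rewrite cardsC card_ord.
  have eqS : forall T : {set 'I_n},
     [&& #|~:S :&: ~:T| == a, #|S :&: ~:T| == b & #|~:S :&: T| == c] =
     [&& #|S| == b + d, #|T :&: S| == d & #|T :&: ~:S| == c].
    move=> T.
    have h1 := cardsID T S; have h2 := cardsID T (~:S).
    rewrite !setDE in h1 h2.
    rewrite [T :&: S]setIC [T :&: ~: S]setIC.
    move: h1 h2 h3; rewrite /d.
    move: #|S| #|~:S| #|~: S :&: ~: T| #|S :&: ~: T| #|~: S :&: T| #|S :&: T| => k k' x1 x2 x3 x4 h1 h2 h3.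
    apply/idP/idP => /and3P [/eqP e1 /eqP e2 /eqP e3]; apply/and3P; split; apply/eqP; lia.
  have [hk|hk] := eqVneq #|S| (b + d)%N.
    have -> : [set T : {set 'I_n} | [&& #|~:S :&: ~:T| == a, #|S :&: ~:T| == b & #|~:S :&: T| == c]] = [set T : {set 'I_n} | (#|T :&: S| == d) && (#|T :&: ~:S| == c)] by apply/setP => T; rewrite !inE eqS hk eqxx.
    rewrite ?eqxx mul1n.
    rewrite Tcount hk; congr (_ * 'C(_, _))%N; lia.
  rewrite ?(negbTE hk) mul0n; apply: eq_card0 => T; rewrite !inE.
  by rewrite eqS (negbTE hk).
rewrite -big_distrl /= -mulnA; congr (_ * _)%N.
have := card_draws 'I_n (b + d); rewrite card_ord => <-.
rewrite -sum1dep_card [RHS]big_mkcond /=; apply: eq_bigr => S _.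
by case: (_ == _).
Qed.

Lemma sumR_card (T : finType) (P : pred T) :
  \sum_(x : T) ((P x)%:R : int) = (#|[set x | P x]|)%:R.
Proof.
rewrite -sum1dep_card natr_sum [RHS]big_mkcond; apply: eq_bigr => x _.
by case: (P x).
Qed.

Lemma pick_sum (m x : nat) (F : nat -> int) : (x < m)%N ->
  \sum_(k < m) ((x == k)%:R * F k) = F x.
Proof.
move=> h; rewrite (bigD1 (Ordinal h)) //= eqxx mul1r big1 ?addr0 // => k hk.
suff -> : (x == k) = false by rewrite mul0r.
apply/negbTE; move: hk; apply: contra => /eqP e; apply/eqP/val_inj => /=.
by rewrite e.
Qed.

Lemma prod_forall (T : finType) (P : pred T) :
  \prod_(x : T) ((P x)%:R : int) = ([forall x, P x])%:R.
Proof.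
case: (boolP [forall x, P x]) => [/forallP h | /forallPn [x hx]].
  by rewrite big1 // => x _; rewrite h.
by rewrite (bigD1 x) //= (negbTE hx) mul0r.
Qed.

Lemma alt_sum (U : finType) (B : {set U}) :
  \sum_(S : {set U}) ((S \subset B)%:R * (-1) ^+ #|S| : int) = (B == set0)%:R.
Proof.
transitivity (\sum_(S : {set U}) \sum_(k < #|B|.+1)
   ((#|S| == k)%:R * (((S \subset B) && (#|S| == k))%:R * (-1) ^+ k) : int)).
  apply: eq_bigr => S _.
  case: (boolP (S \subset B)) => hS.
    have P := @pick_sum #|B|.+1 #|S| (fun k : nat => ((S \subset B) && (#|S| == k))%:R * (-1) ^+ k) ltac:(by rewrite ltnS subset_leq_card).
    cbv beta in P; rewrite hS in P.
    by rewrite P eqxx.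
  by rewrite mul0r big1 // => k _; rewrite /= !mul0r mulr0.
rewrite exchange_big /=.
transitivity (\sum_(k < #|B|.+1) (('C(#|B|, k))%:R * (-1) ^+ k : int)).
  apply: eq_bigr => k _.
  rewrite -cards_draws -sumR_card mulr_suml; apply: eq_bigr => S _.
  by case: (#|S| == k); case: (S \subset B); rewrite /= ?mul1r ?mul0r.
have := exprDn (1 : int) (-1) #|B|; rewrite addrN => e.
rewrite [RHS](_ : _ = (0 : int) ^+ #|B|); last first.
  by rewrite -cards_eq0; case: #|B| => [|m]; rewrite ?expr0 ?expr0n.
rewrite e; apply: eq_bigr => k _; by rewrite expr1n mul1r mulr_natl.
Qed.

Set Implicit Arguments. Unset Strict Implicit.

Lemma ord2_cases (i : 'I_2) : i = ord0 \/ i = ord_max.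
Proof. by case: i => [[|[|k]] h] //; [left|right]; apply/val_inj. Qed.

Definition r0 n (A : {ffun 'I_2 * 'I_n -> 'I_n}) (j : 'I_n) := A (ord0, j).
Definition r1 n (A : {ffun 'I_2 * 'I_n -> 'I_n}) (j : 'I_n) := A (ord_max, j).

Lemma latin_eq n (A : {ffun 'I_2 * 'I_n -> 'I_n}) :
  latin_rect A = [&& injectiveb (r0 A), injectiveb (r1 A) &
                     [forall j, r0 A j != r1 A j]].
Proof.
rewrite /latin_rect /r0 /r1; apply/andP/and3P.
  case=> /forallP H1 /forallP H2; split.
  - apply/injectiveP => j1 j2 e.
    by have /forallP/(_ j1)/forallP/(_ j2)/implyP := H1 ord0; rewrite e eqxx => /(_ isT)/eqP.
  - apply/injectiveP => j1 j2 e.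
    by have /forallP/(_ j1)/forallP/(_ j2)/implyP := H1 ord_max; rewrite e eqxx => /(_ isT)/eqP.
  - apply/forallP => j; apply/negP => e.
    by have /forallP/(_ ord0)/forallP/(_ ord_max)/implyP := H2 j; rewrite e => /(_ isT).
case=> /injectiveP inj0 /injectiveP inj1 /forallP c; split.
  apply/forallP => i; apply/forallP => j1; apply/forallP => j2; apply/implyP => /eqP e.
  by apply/eqP; case: (ord2_cases i) e => -> e; [apply: inj0 | apply: inj1].
apply/forallP => j; apply/forallP => i1; apply/forallP => i2; apply/implyP => /eqP e.
have := c j.
by case: (ord2_cases i1) e => ->; case: (ord2_cases i2) => -> e; rewrite ?e ?eqxx.
Qed.

Lemma inj_alt n (r : 'I_n -> 'I_n) :
  (injectiveb r)%:R =
  \sum_(S : {set 'I_n}) (([forall j, r j \notin S])%:R * (-1) ^+ #|S| : int).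
Proof.
have H : forall S : {set 'I_n}, [forall j, r j \notin S] = (S \subset ~: (r @: [set: 'I_n])).
  move=> S; apply/forallP/subsetP.
    move=> H x xS; rewrite inE; apply/imsetP => -[j _ e].
    by have := H j; rewrite -e xS.
  move=> H j; apply/negP => h; have := H _ h; rewrite inE.
  by rewrite imset_f ?inE.
rewrite (eq_bigr (fun S : {set 'I_n} => ((S \subset ~: (r @: [set: 'I_n]))%:R * (-1) ^+ #|S| : int))); last by move=> S _; rewrite H.
rewrite alt_sum -setCT (inj_eq (@setC_inj _)) eqEcard subsetT cardsT /=.
suff E : injectiveb r = (#|'I_n| <= #|[set r x | x in [set: 'I_n]]|)%N by rewrite E.
apply/idP/idP.
  by move/injectiveP => inj; rewrite card_imset // cardsT.
move=> h; apply/injectiveP => x y.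
have hi : {in [set: 'I_n] &, injective r}.
  by apply/imset_injP; rewrite eqn_leq cardsT h andbT max_card.
by apply: hi; rewrite inE.
Qed.

Lemma latin_sum n (A : {ffun 'I_2 * 'I_n -> 'I_n}) :
  (latin_rect A)%:R =
  \sum_(S : {set 'I_n}) \sum_(T : {set 'I_n})
    ((-1) ^+ #|S| * (-1) ^+ #|T| *
     \prod_(j : 'I_n) (((r0 A j \notin S) && (r1 A j \notin T) && (r0 A j != r1 A j))%:R) : int).
Proof.
rewrite latin_eq.
have E : forall a b c : bool, ([&& a, b & c]%:R : int) = a%:R * b%:R * c%:R.
  by case; case; case; rewrite /= ?mul1r ?mul0r ?mulr0.
rewrite E !inj_alt.
have E2 : forall S T : {set 'I_n}, \prod_(j : 'I_n) (((r0 A j \notin S) && (r1 A j \notin T) && (r0 A j != r1 A j))%:R : int) =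
   [forall j, r0 A j \notin S]%:R * [forall j, r1 A j \notin T]%:R * [forall j, r0 A j != r1 A j]%:R.
  move=> S T; rewrite -!prod_forall -!big_split /=; apply: eq_bigr => j _.
  by case: (r0 A j \notin S); case: (r1 A j \notin T); case: (r0 A j != r1 A j); rewrite /= ?mul1r ?mul0r ?mulr0.
rewrite -mulrA big_distrl /=; apply: eq_bigr => S _.
rewrite mulrA big_distrr big_distrl /=; apply: eq_bigr => T _.
rewrite E2; ring.
Qed.

Lemma ffun_fact n (P : 'I_n -> 'I_n -> int) :
  \sum_(A : {ffun 'I_2 * 'I_n -> 'I_n}) \prod_(j : 'I_n) P (r0 A j) (r1 A j) =
  (\sum_(x : 'I_n) \sum_(y : 'I_n) P x y) ^+ n.
Proof.
pose h (g : {ffun 'I_n -> 'I_n * 'I_n}) : {ffun 'I_2 * 'I_n -> 'I_n} :=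
  [ffun p => if p.1 == ord0 then (g p.2).1 else (g p.2).2].
pose k (A : {ffun 'I_2 * 'I_n -> 'I_n}) : {ffun 'I_n -> 'I_n * 'I_n} :=
  [ffun j => (A (ord0, j), A (ord_max, j))].
have hk : cancel k h.
  move=> A; apply/ffunP => -[i j]; rewrite !ffunE /=.
  by case: (ord2_cases i) => ->.
have kh : cancel h k.
  move=> g; apply/ffunP => j; rewrite !ffunE /=.
  by rewrite ?eqxx; case: (g j).
rewrite (reindex h); last by exists k => x _.
rewrite /r0 /r1.
under eq_bigr => g _ do under eq_bigr => j _ do rewrite !ffunE /=.
transitivity (\prod_(j : 'I_n) \sum_(p : 'I_n * 'I_n) P p.1 p.2).
  by rewrite bigA_distr_bigA.
by rewrite prodr_const card_ord pair_bigA.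
Qed.

Lemma sumR_setC n (S : {set 'I_n}) :
  \sum_(x : 'I_n) (((x \notin S))%:R : int) = #|~: S|%:R.
Proof.
by rewrite sumR_card; congr (_%:R); apply: eq_card => x; rewrite !inE.
Qed.

Lemma pair_count n (S T : {set 'I_n}) :
  \sum_(x : 'I_n) \sum_(y : 'I_n) (((x \notin S) && (y \notin T) && (x != y))%:R : int)
  = #|~:S|%:R * #|~:T|%:R - #|~:S :&: ~:T|%:R.
Proof.
have E : forall (a b c : bool), ((a && b && ~~ c)%:R : int) = a%:R * b%:R - (a && b && c)%:R.
  by case; case; case; rewrite /= ?mul1r ?mul0r ?subr0 ?subrr.
under eq_bigr => x _ do under eq_bigr => y _ do rewrite E.
under eq_bigr => x _ do rewrite sumrB -big_distrr /=.
rewrite sumrB -big_distrl /= !sumR_setC; congr (_ - _).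
transitivity (\sum_(x : 'I_n) (((x \notin S) && (x \notin T))%:R : int)).
  apply: eq_bigr => x _.
  rewrite (bigD1 x) //= eqxx andbT big1 ?addr0 // => y hy.
  by rewrite eq_sym (negbTE hy) andbF.
by rewrite sumR_card; congr (_%:R); apply: eq_card => x; rewrite !inE.
Qed.

Lemma neq_ord m (x : nat) (h : (x < m)%N) (a : 'I_m) : a != Ordinal h -> (x == a) = false.
Proof.
move=> ha; apply/negbTE; move: ha; apply: contra => /eqP e; apply/eqP/val_inj => /=.
by rewrite e.
Qed.

Lemma pick3 n (F : nat -> nat -> nat -> int) x y z :
  (x < n.+1)%N -> (y < n.+1)%N -> (z < n.+1)%N ->
  F x y z = \sum_(a < n.+1) \sum_(b < n.+1) \sum_(c < n.+1)
              (([&& x == a, y == b & z == c])%:R * F a b c).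
Proof.
move=> hx hy hz.
rewrite (bigD1 (Ordinal hx)) //= [X in _ + X]big1 ?addr0; last first.
  move=> a ha; apply: big1 => b _; apply: big1 => c _.
  by rewrite (neq_ord ha) mul0r.
rewrite (bigD1 (Ordinal hy)) //= [X in _ + X]big1 ?addr0; last first.
  move=> b hb; apply: big1 => c _.
  by rewrite (neq_ord hb) andbF mul0r.
rewrite (bigD1 (Ordinal hz)) //= [X in _ + X]big1 ?addr0; last first.
  move=> c hc.
  by rewrite (neq_ord hc) !andbF mul0r.
by rewrite !eqxx mul1r.
Qed.

Definition Gf (n a b c : nat) : int :=
  if (a + b + c <= n)%N then
    (-1) ^+ (b + c + 2 * (n - (a + b + c)))%N *
    (((a + b) * (a + c))%:Z - a%:Z) ^+ n
  else 0.

Lemma term_eq n (S T : {set 'I_n}) :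
  (-1) ^+ #|S| * (-1) ^+ #|T| * (#|~:S|%:R * #|~:T|%:R - #|~:S :&: ~:T|%:R) ^+ n
  = Gf n #|~:S :&: ~:T| #|S :&: ~:T| #|~:S :&: T|.
Proof.
have h1 := cardsID T S; have h2 := cardsID T (~:S).
have h3 := cardsID S T; have h4 := cardsID S (~:T).
have h5 : (#|S| + #|~:S| = n)%N by rewrite cardsC card_ord.
rewrite !setDE in h1 h2 h3 h4.
rewrite [T :&: S]setIC [T :&: ~: S]setIC [~: T :&: S]setIC [~:T :&: ~:S]setIC in h3 h4.
rewrite /Gf.
move: h1 h2 h3 h4 h5.
move: #|S| #|~:S| #|T| #|~:T| #|~: S :&: ~: T| #|S :&: ~: T| #|~: S :&: T| #|S :&: T|.
move=> s s' t t' a b c d h1 h2 h3 h4 h5.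
have -> : (a + b + c <= n)%N by lia.
rewrite -exprD; congr (_ * _).
  congr (_ ^+ _); lia.
congr (_ ^+ _); rewrite !natz -!PoszM.
have -> : s' = (a + c)%N by lia.
have -> : t' = (a + b)%N by lia.
by rewrite mulnC.
Qed.


Lemma swap5 (I J A B C : finType) (F : I -> J -> A -> B -> C -> int) :
  \sum_(i : I) \sum_(j : J) \sum_(a : A) \sum_(b : B) \sum_(c : C) F i j a b c =
  \sum_(a : A) \sum_(b : B) \sum_(c : C) \sum_(i : I) \sum_(j : J) F i j a b c.
Proof.
transitivity (\sum_(i : I) \sum_(a : A) \sum_(j : J) \sum_(b : B) \sum_(c : C) F i j a b c).
  by apply: eq_bigr => i _; exact: exchange_big.
rewrite exchange_big; apply: eq_bigr => a _.
transitivity (\sum_(i : I) \sum_(b : B) \sum_(j : J) \sum_(c : C) F i j a b c).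
  by apply: eq_bigr => i _; exact: exchange_big.
rewrite exchange_big; apply: eq_bigr => b _.
transitivity (\sum_(i : I) \sum_(c : C) \sum_(j : J) F i j a b c).
  by apply: eq_bigr => i _; exact: exchange_big.
by rewrite exchange_big.
Qed.

Unset Implicit Arguments.
Set Strict Implicit.

Theorem mainTheorem2 (n : nat) : (0 < n)%N ->
  (L 2 n)%:Z =
  \sum_(s00 < n.+1) \sum_(s10 < n.+1) \sum_(s01 < n.+1)
    if (s00 + s10 + s01 <= n)%N then
      let s11 := (n - (s00 + s10 + s01))%N in
      (-1) ^+ (s10 + s01 + 2 * s11)%N *
      ((n`! %/ (s00`! * s10`! * s01`! * s11`!))%N)%:Z *
      (((s00 + s10) * (s00 + s01))%:Z - s00%:Z) ^+ n
    else 0.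
Proof.
move=> _.
rewrite /L -natz -sumR_card.
under eq_bigr => A _ do rewrite latin_sum.
rewrite exchange_big /=.
under eq_bigr => S _ do rewrite exchange_big /=.
transitivity (\sum_(S : {set 'I_n}) \sum_(T : {set 'I_n})
   Gf n #|~:S :&: ~:T| #|S :&: ~:T| #|~:S :&: T|).
  apply: eq_bigr => S _; apply: eq_bigr => T _.
  rewrite -big_distrr /=.
  have F := ffun_fact (fun x y => (((x \notin S) && (y \notin T) && (x != y))%:R : int)).
  cbv beta in F; rewrite F pair_count term_eq //.
have cb : forall A : {set 'I_n}, (#|A| < n.+1)%N.
  by move=> A; rewrite ltnS -[X in (_ <= X)%N]card_ord max_card.
transitivity (\sum_(S : {set 'I_n}) \sum_(T : {set 'I_n})
  \sum_(a < n.+1) \sum_(b < n.+1) \sum_(c < n.+1)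
   (([&& #|~:S :&: ~:T| == a, #|S :&: ~:T| == b & #|~:S :&: T| == c])%:R * Gf n a b c)).
  apply: eq_bigr => S _; apply: eq_bigr => T _; exact: pick3.
rewrite swap5; apply: eq_bigr => a _; apply: eq_bigr => b _; apply: eq_bigr => c _.
under eq_bigr => S _ do rewrite -big_distrl /= sumR_card.
rewrite -big_distrl /= -natr_sum.
rewrite /Gf; case: ifP => h; last by rewrite mulr0.
rewrite Ncount // -multinom // natz.
ring.
Qed.
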